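(* Let $p$ be one of $(12,\{0,1\},\{0,1\})$, $(12,\{0,1\},\{0,2\})$, $(12,\{0,1\},\{1,2\})$, $(12,\{0,2\},\{0,2\})$, or any pattern in the same symmetry class as one of these. Then for all $n>1$, $a_n(p)=n!-(n-2)!$.
   Context: For $n\ge1$, $\mathcal S_n$ is the set of permutations $\pi=\pi_1\cdots\pi_n$ of $[n]$. A bi-vincular pattern of length $k$ is a triple $p=(\sigma,X,Y)$ with $\sigma\in\mathcal S_k$ and $X,Y\subseteq\{0,1,\dots,k\}$. A permutation $\pi\in\mathcal S_n$ contains $p$ if there are indices $1\le i_1<\dots<i_k\le n$ such that $(\pi_{i_1},\dots,\pi_{i_k})$ is order-isomorphic to $\sigma$ and, letting $j_1<\dots<j_k$ be the values $\pi_{i_1},\dots,\pi_{i_k}$ sorted increasingly and setting $i_0=j_0=0$, $i_{k+1}=j_{k+1}=n+1$, one has $i_{x+1}=i_x+1$ for all $x\in X$ and $j_{y+1}=j_y+1$ for all $y\in Y$. Otherwise $\pi$ avoids $p$; $a_n(p)$ is the number of $\pi\in\mathcal S_n$ avoiding $p$. Symmetries: $p^{i}=(\sigma^{-1},Y,X)$, $p^{r}=(\sigma^{r},\{k-x:x\in X\},Y)$, $p^{c}=(\sigma^{c},X,\{k-y:y\in Y\})$ with $\sigma^r_j=\sigma_{k+1-j}$, $\sigma^c_j=k+1-\sigma_j$; the symmetry class of $p$ consists of all patterns obtained from $p$ by finitely many applications of these maps. *)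

(* Defs.v *)
From mathcomp Require Import all_boot all_order all_fingroup.
Set Implicit Arguments. Unset Strict Implicit. Unset Printing Implicit Defensive.

(* Permutations of [n] are represented by 'S_n (0-indexed: value pi i + 1 at
   position i + 1).  A bi-vincular pattern of length k is (sigma, X, Y) with
   sigma : 'S_k and X, Y subsets of {0,...,k} = 'I_k.+1. *)
Record bvpat := BV { bk : nat; bsig : 'S_bk; bX : {set 'I_bk.+1}; bY : {set 'I_bk.+1} }.

Definition revperm (k : nat) : 'S_k := perm (@rev_ord_inj k).

(* symmetries; recall (s * t) x = t (s x) in mathcomp *)
Definition pat_i (p : bvpat) : bvpat := @BV (bk p) (bsig p)^-1 (bY p) (bX p).
Definition pat_r (p : bvpat) : bvpat :=
  @BV (bk p) (revperm (bk p) * bsig p) [set rev_ord x | x in bX p] (bY p).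
Definition pat_c (p : bvpat) : bvpat :=
  @BV (bk p) (bsig p * revperm (bk p)) (bX p) [set rev_ord y | y in bY p].

Inductive in_sym_class (p : bvpat) : bvpat -> Prop :=
| sc_refl : in_sym_class p p
| sc_i q : in_sym_class p q -> in_sym_class p (pat_i q)
| sc_r q : in_sym_class p q -> in_sym_class p (pat_r q)
| sc_c q : in_sym_class p q -> in_sym_class p (pat_c q).

Definition occurrence (n : nat) (pi : 'S_n) (p : bvpat) (f : {ffun 'I_(bk p) -> 'I_n}) : bool :=
  let k := bk p in
  [forall a : 'I_k, forall b : 'I_k, (a < b) ==> (f a < f b)] &&
  [forall a : 'I_k, forall b : 'I_k, (pi (f a) < pi (f b)) == (bsig p a < bsig p b)] &&
  (let I := 0 :: [seq (f j).+1 | j <- enum 'I_k] ++ [:: n.+1] in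
   (* sorted values j_1 < ... < j_k, padded with j_0 = 0, j_{k+1} = n+1 *)
   let J := 0 :: sort leq [seq (pi (f j)).+1 | j <- enum 'I_k] ++ [:: n.+1] in
   [forall x : 'I_k.+1, (x \in bX p) ==> (nth 0 I x.+1 == (nth 0 I x).+1)] &&
   [forall y : 'I_k.+1, (y \in bY p) ==> (nth 0 J y.+1 == (nth 0 J y).+1)]).

Definition contains (n : nat) (pi : 'S_n) (p : bvpat) : bool :=
  [exists f : {ffun 'I_(bk p) -> 'I_n}, @occurrence n pi p f].

Definition avoiders (n : nat) (p : bvpat) : nat := #|[set pi : 'S_n | ~~ contains pi p]|.

Definition pat12 (X Y : {set 'I_3}) : bvpat := @BV 2 1%g X Y.

(* Main.v *)
Require Import Defs.
From mathcomp Require Import all_boot all_order all_fingroup.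
From mathcomp Require Import zify.

Lemma card_fix2 n (a c u v : 'I_n) : a != c -> u != v ->
  #|[set pi : 'S_n | (pi a == u) && (pi c == v)]| = (n - 2)`!.
Proof.
move=> ac uv.
pose v' := tperm u a v.
have v'a : v' != a.
  apply/eqP=> E; have : tperm u a v = tperm u a u by rewrite tpermL.
  by move/perm_inj/eqP; rewrite eq_sym (negbTE uv).
pose g : 'S_n := (tperm u a * tperm v' c)%g.
have gu : g u = a by rewrite permM tpermL tpermD // eq_sym.
have gv : g v = c by rewrite permM -/v' tpermL.
pose S := ~: [set a; c].
have -> : [set pi : 'S_n | (pi a == u) && (pi c == v)] =
   [set (s * g^-1)%g | s in perm_on S].
  apply/setP=> pi; rewrite inE; apply/andP/imsetP.
  - move=> [/eqP pa /eqP pc]; exists (pi * g)%g; last by rewrite -mulgA mulgV mulg1.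
    apply/subsetP=> x; rewrite !inE => Hx; idtac.
    by apply: contra Hx => /orP[]/eqP->; rewrite permM ?pa ?pc ?gu ?gv.
  - move=> [s Hs ->]; rewrite !permM !(out_perm Hs) ?inE ?eqxx ?orbT //.
    by rewrite -gu -gv !permK !eqxx.
rewrite (card_imset _ (@mulIg _ g^-1)%g).
rewrite card_perm cardsCs setCK cards2 ac card_ord.
done.
Qed.

Lemma forall_ord3 (P : pred 'I_3) :
  [forall t, P t] = [&& P (@Ordinal 3 0 isT), P (@Ordinal 3 1 isT) & P (@Ordinal 3 2 isT)].
Proof.
apply/forallP/and3P => [H|[H0 H1 H2] [[|[|[|//]]] Hz]]; first by rewrite !H.
- by rewrite (eq_irrelevance Hz isT).
- by rewrite (eq_irrelevance Hz isT).
- by rewrite (eq_irrelevance Hz isT).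
Qed.

Definition posA (z : 'I_3) n := if val z == 0 then n - 2 else 0.
Definition posC (z : 'I_3) n := if val z == 2 then 1 else n - 1.

Lemma Xcond (X : {set 'I_3}) (z : 'I_3) (x y n : nat) : (forall t, (t \in X) = (t != z)) -> 1 < n -> x < y ->
 [forall t : 'I_3, (t \in X) ==> (nth 0 [:: 0; x.+1; y.+1; n.+1] t.+1 == (nth 0 [:: 0; x.+1; y.+1; n.+1] t).+1)]
  = (x == posA z n) && (y == posC z n).
Proof.
move=> HX n1 xy; rewrite forall_ord3 !HX {HX X} /posA /posC.
by case: z => [[|[|[|//]]] Hz] /=; rewrite ?andbT;
  apply/andP/andP => -[/eqP H1 /eqP H2]; split; apply/eqP; lia.
Qed.


Arguments Xcond {X z x y n}.

Lemma sort2 (x y : nat) : sort leq [:: x; y] = [:: minn x y; maxn x y].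
Proof. by rewrite /sort /=; case: leqP. Qed.

Lemma posAC z n : 1 < n -> posA z n < posC z n.
Proof. by rewrite /posA /posC; case: z => [[|[|[|//]]] Hz] /=; lia. Qed.
Lemma posCn z n : 1 < n -> posC z n < n.
Proof. by rewrite /posA /posC; case: z => [[|[|[|//]]] Hz] /=; lia. Qed.

Definition o1 : 'I_2 := @Ordinal 2 1 isT.

Lemma forall_ord2 (P : pred 'I_2) :
  [forall t, P t] = P ord0 && P o1.
Proof.
apply/forallP/andP => [H|[H0 H1] [[|[|//]] Hz]]; first by split; apply: H.
- by have -> : Ordinal Hz = ord0 by apply: val_inj.
- by have -> : Ordinal Hz = o1 by apply: val_inj.
Qed.

Lemma enum2 : enum 'I_2 = [:: ord0; o1].
Proof. by apply: (inj_map val_inj); rewrite val_enum_ord. Qed.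

Lemma contains_char n (pi : 'S_n) (s : 'S_2) (X Y : {set 'I_3}) (z w : 'I_3) (n1 : 1 < n) :
 (forall t, (t \in X) = (t != z)) -> (forall t, (t \in Y) = (t != w)) ->
 let A := Ordinal (ltn_trans (posAC z n n1) (posCn z n n1)) in
 let C := Ordinal (posCn z n n1) in
 let B := Ordinal (ltn_trans (posAC w n n1) (posCn w n n1)) in
 let D := Ordinal (posCn w n n1) in
 let sb := s ord0 < s o1 in
 contains pi (@BV 2 s X Y) = (pi A == if sb then B else D) && (pi C == if sb then D else B).
Proof.
move=> HX HY A C B D sb.
have ACn := posAC z n n1; have BDn := posAC w n n1.
have s01 : s ord0 != s o1 by rewrite (inj_eq perm_inj).
rewrite /contains /occurrence /=.
apply/existsP/andP.
- move=> [f]; rewrite enum2 /= sort2 !forall_ord2 /= minnSS maxnSS.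
  move=> /and3P[/and4P[/andP[f01 _] /andP[_ ord] _ _] CX CY].
  have /andP[/eqP a0 /eqP c0] : (f ord0 == posA z n :> nat) && (f o1 == posC z n :> nat)
    by rewrite -(Xcond HX n1 f01).
  have pne : pi (f ord0) != pi (f o1) :> nat.
    by rewrite (inj_eq val_inj) (inj_eq perm_inj) -(inj_eq val_inj) neq_ltn f01.
  have mm : minn (pi (f ord0)) (pi (f o1)) < maxn (pi (f ord0)) (pi (f o1)) by lia.
  have /andP[/eqP b0 /eqP d0] := etrans (esym (Xcond HY n1 mm)) CY.
  have -> : A = f ord0 by apply: val_inj; rewrite /= a0.
  have -> : C = f o1 by apply: val_inj; rewrite /= c0.
  rewrite /sb; case: (s ord0 < s o1) ord => /eqP; [move=> ord | move/negbT => ord];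
    split; apply/eqP/val_inj => /=;
    move: ord b0 d0; set p0 := (pi (f ord0) : nat); set p1 := (pi (f o1) : nat); lia.
- move=> [/eqP HA /eqP HC].
  exists [ffun i => if i == ord0 then A else C].
  rewrite enum2 /= sort2 !forall_ord2 /= minnSS maxnSS !ffunE /=.
  have s01' : (s ord0 : nat) != s o1 by [].
  have [vA vC] : (pi A : nat) = (if sb then posA w n else posC w n) /\
                 (pi C : nat) = (if sb then posC w n else posA w n)
    by rewrite HA HC; case: (sb).
  have [mn mx] : minn (pi A) (pi C) = posA w n /\ maxn (pi A) (pi C) = posC w n.
    by move: vA vC; rewrite /sb; case: (s ord0 < s o1) => -> ->; lia.
  have mm : minn (pi A) (pi C) < maxn (pi A) (pi C) by rewrite mn mx.
  rewrite ACn !ltnn !eqxx /=; apply/and3P; split.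
  - move: vA vC s01'; rewrite /sb; set s0 := (s ord0 : nat); set s1 := (s o1 : nat).
    set p0 := (pi A : nat); set p1 := (pi C : nat).
    case: ltngtP => /= _ -> -> //; rewrite ?eqxx //.
    + by rewrite BDn ltnNge (ltnW BDn).
    + by rewrite ltnNge (ltnW BDn) BDn.
  - by have E := Xcond HX n1 ACn; rewrite !eqxx in E; exact E.
  - by rewrite mn mx; have E := Xcond HY n1 BDn; rewrite !eqxx in E; exact E.
Qed.

Lemma two_set (X : {set 'I_3}) : #|X| = 2 -> exists z, forall t, (t \in X) = (t != z).
Proof.
move=> HX; have : #|~: X| == 1 by rewrite cardsCs setCK card_ord HX.
move=> /cards1P [z Hz]; exists z => t.
by rewrite -[t \in X]negbK -in_setC Hz inE.
Qed.

Lemma inv_class p0 q : in_sym_class p0 q ->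
  (exists s X Y, p0 = @BV 2 s X Y /\ #|X| = 2 /\ #|Y| = 2) ->
  (exists s X Y, q = @BV 2 s X Y /\ #|X| = 2 /\ #|Y| = 2).
Proof.
move=> H H0; elim: H => // q' _ [s [X [Y [-> [HX HY]]]]].
- by exists s^-1%g, Y, X.
- exists (revperm 2 * s)%g, [set rev_ord x | x in X], Y; split => //.
  by rewrite card_imset //; exact: rev_ord_inj.
- exists (s * revperm 2)%g, X, [set rev_ord x | x in Y]; split => //.
  by rewrite card_imset //; exact: rev_ord_inj.
Qed.

Lemma base_card (a b : 'I_3) : val a != val b -> #|[set a; b]| = 2.
Proof. by move=> ab; rewrite cards2 -(inj_eq val_inj) ab. Qed.

Lemma v1 : (inord 1 : 'I_3) = 1 :> nat. Proof. by rewrite inordK. Qed.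
Lemma v2 : (inord 2 : 'I_3) = 2 :> nat. Proof. by rewrite inordK. Qed.

Lemma avoid_count n (s : 'S_2) (X Y : {set 'I_3}) : 1 < n -> #|X| = 2 -> #|Y| = 2 ->
  avoiders n (@BV 2 s X Y) = n`! - (n - 2)`!.
Proof.
move=> n1 /two_set[z HX] /two_set[w HY].
rewrite /avoiders.
have -> : [set pi : 'S_n | ~~ contains pi (@BV 2 s X Y)] = ~: [set pi : 'S_n | contains pi (@BV 2 s X Y)].
  by apply/setP => pi; rewrite !inE.
set S := [set pi | contains pi _].
pose A := Ordinal (ltn_trans (posAC z n n1) (posCn z n n1)).
pose C := Ordinal (posCn z n n1).
pose B := Ordinal (ltn_trans (posAC w n n1) (posCn w n n1)).
pose D := Ordinal (posCn w n n1).
pose sb := s ord0 < s o1.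
have -> : S = [set pi : 'S_n | (pi A == if sb then B else D) && (pi C == if sb then D else B)].
  by apply/setP => pi; rewrite !inE; exact: (@contains_char n pi s X Y z w n1 HX HY).
set T := [set pi : 'S_n | _].
have := cardsC T; rewrite card_Sn card_fix2 => [<-||].
- by rewrite addKn.
- by rewrite -(inj_eq val_inj) /= neq_ltn posAC.
- by case: (sb); rewrite -(inj_eq val_inj) /= neq_ltn posAC ?orbT.
Qed.

Lemma base_ok (a b c d : 'I_3) : val a != val b -> val c != val d ->
  exists s X Y, pat12 [set a; b] [set c; d] = @BV 2 s X Y /\ #|X| = 2 /\ #|Y| = 2.
Proof. by move=> ab cd; exists 1%g, [set a; b], [set c; d]; rewrite !base_card. Qed.

Theorem mainTheorem5 (p : bvpat) :
  (in_sym_class (pat12 [set ord0; inord 1] [set ord0; inord 1]) p \/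
   in_sym_class (pat12 [set ord0; inord 1] [set ord0; inord 2]) p \/
   in_sym_class (pat12 [set ord0; inord 1] [set inord 1; inord 2]) p \/
   in_sym_class (pat12 [set ord0; inord 2] [set ord0; inord 2]) p) ->
  forall n : nat, 1 < n -> avoiders n p = n`! - (n - 2)`!.
Proof.
move=> H n n1.
have [s [X [Y [-> [HX HY]]]]] :
  exists s X Y, p = @BV 2 s X Y /\ #|X| = 2 /\ #|Y| = 2.
  case: H => [H|[H|[H|H]]]; apply: (inv_class _ _ H); apply: base_ok; by rewrite /= ?v1 ?v2.
exact: avoid_count.
Qed.
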